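(* Let $\mathcal L>0$, $m_\pm>0$, $\rho_\pm>0$, $S_+<0<S_-$, $\lambda_\pm=\sqrt{\rho_\pm/m_\pm}$, and $S_I=0$. Consider the ODE system $\dot q_1=\mathcal H_1^{\rm p}(q_1,q_2)$, $\dot q_2=\mathcal H_2^{\rm p}(q_1,q_2)$ with \[ \mathcal H_1^{\rm p}(q_1,q_2)=\tfrac12\Big(-\tfrac{S_+}{\rho_+}m_+\lambda_+\tanh\big(\lambda_+\tfrac{q_2-q_1}{2}\big)-\tfrac{S_-}{\rho_-}m_-\lambda_-\tanh(\lambda_-q_1)-S_I\Big), \] \[ \mathcal H_2^{\rm p}(q_1,q_2)=\tfrac12\Big(\tfrac{S_+}{\rho_+}m_+\lambda_+\tanh\big(\lambda_+\tfrac{q_2-q_1}{2}\big)+\tfrac{S_-}{\rho_-}m_-\lambda_-\tanh(\lambda_-(\mathcal L-q_2))+S_I\Big), \] the function \[ \mathcal E(q_1,q_2)=\frac{\frac{S_-}{\rho_-}m_-}{2}\ln\cosh(\lambda_-q_1)+\frac{\frac{S_-}{\rho_-}m_-}{2}\ln\cosh(\lambda_-(\mathcal L-q_2))-\frac{S_+}{\rho_+}m_+\ln\cosh\Big(\lambda_+\frac{q_2-q_1}{2}\Big)+\frac12S_I(q_1-q_2), \] and the set $\mathcal T=\{(q_1,q_2)\in\mathbb R^2: 0\le q_2\le\mathcal L,\ 0\le q_1\le q_2\}$. Then the system admits a unique symmetric stationary solution $(q_1^\star,q_2^\star)$, with $q_1^\star=\mathcal L-q_2^\star\in(0,\mathcal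 L/2)$, which is the global minimum of $\mathcal E$ on $\mathcal T$. Moreover, every solution with initial data $(q_1(0),q_2(0))\in\mathcal T$ converges to $(q_1^\star,q_2^\star)$ as $t\to\infty$.
   Context: A symmetric stationary solution is a pair $(q_1^\star,q_2^\star)$ with $\mathcal H_1^{\rm p}(q_1^\star,q_2^\star)=\mathcal H_2^{\rm p}(q_1^\star,q_2^\star)=0$ and $q_1^\star=\mathcal L-q_2^\star$. *)

(* Defs.v *)
From Stdlib Require Import Reals.
From Coquelicot Require Import Coquelicot.
Open Scope R_scope.

(* Parameters: L, m_+ (mp), m_- (mm), rho_+ (rp), rho_- (rm), S_+ (Sp),
   S_- (Sm), S_I (SI).  lambda_pm = sqrt (rho_pm / m_pm). *)

Definition lam (rho m : R) : R := sqrt (rho / m).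

Definition H1p (L mp mm rp rm Sp Sm SI : R) (q1 q2 : R) : R :=
  / 2 * ( - (Sp / rp) * mp * lam rp mp * tanh (lam rp mp * ((q2 - q1) / 2))
          - (Sm / rm) * mm * lam rm mm * tanh (lam rm mm * q1)
          - SI).

Definition H2p (L mp mm rp rm Sp Sm SI : R) (q1 q2 : R) : R :=
  / 2 * ( (Sp / rp) * mp * lam rp mp * tanh (lam rp mp * ((q2 - q1) / 2))
          + (Sm / rm) * mm * lam rm mm * tanh (lam rm mm * (L - q2))
          + SI).

Definition Ep (L mp mm rp rm Sp Sm SI : R) (q1 q2 : R) : R :=
  ((Sm / rm) * mm) / 2 * ln (cosh (lam rm mm * q1))
  + ((Sm / rm) * mm) / 2 * ln (cosh (lam rm mm * (L - q2)))
  - (Sp / rp) * mp * ln (cosh (lam rp mp * ((q2 - q1) / 2)))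
  + / 2 * SI * (q1 - q2).

Definition inT (L q1 q2 : R) : Prop := 0 <= q2 <= L /\ 0 <= q1 <= q2.

Definition sym_stationary (L mp mm rp rm Sp Sm SI : R) (q1 q2 : R) : Prop :=
  H1p L mp mm rp rm Sp Sm SI q1 q2 = 0 /\
  H2p L mp mm rp rm Sp Sm SI q1 q2 = 0 /\ q1 = L - q2.

Definition is_solution (L mp mm rp rm Sp Sm SI : R) (q1 q2 : R -> R) : Prop :=
  (forall t, 0 < t ->
     is_derive q1 t (H1p L mp mm rp rm Sp Sm SI (q1 t) (q2 t)) /\
     is_derive q2 t (H2p L mp mm rp rm Sp Sm SI (q1 t) (q2 t))) /\
  filterlim q1 (at_right 0) (locally (q1 0)) /\
  filterlim q2 (at_right 0) (locally (q2 0)).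

(* Main.v *)
Require Import Defs.
From Stdlib Require Import Reals Lra Psatz.
From Coquelicot Require Import Coquelicot.
Open Scope R_scope.


Lemma cosh_pos x : 0 < cosh x.
Proof. unfold cosh. pose proof (exp_pos x); pose proof (exp_pos (-x)); lra. Qed.

Lemma cosh_ge1 x : 1 <= cosh x.
Proof.
  unfold cosh. pose proof (exp_pos x). 
  assert (exp (-x) = / exp x) by (rewrite exp_Ropp; auto).
  rewrite H0. assert (0 <= (exp x - 1)^2) by apply pow2_ge_0.
  assert ((exp x + / exp x) / 2 - 1 = (exp x - 1)^2 / (2 * exp x)) by (field; lra).
  assert (0 <= (exp x - 1)^2 / (2 * exp x)) by (apply Rdiv_le_0_compat; lra).
  lra.
Qed.

Lemma cont_of_derive f x l : is_derive f x l -> continuity_pt f x.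
Proof.
  intros H. apply continuity_pt_filterlim. apply (ex_derive_continuous f x).
  eexists; eauto.
Qed.

Lemma nonincr (f df : R -> R) a b : a <= b ->
  (forall t, a <= t <= b -> is_derive f t (df t)) ->
  (forall t, a <= t <= b -> df t <= 0) -> f b <= f a.
Proof.
  intros hab hd hn.
  destruct (MVT_gen f a b df) as [c [hc e]].
  - intros x hx. rewrite Rmin_left in hx by lra. rewrite Rmax_right in hx by lra.
    apply hd; lra.
  - intros x hx. rewrite Rmin_left in hx by lra. rewrite Rmax_right in hx by lra.
    eapply cont_of_derive. apply hd; lra.
  - rewrite Rmin_left in hc by lra. rewrite Rmax_right in hc by lra.
    specialize (hn c hc). nra.
Qed.

Lemma sinh_ge z : 0 <= z -> z <= sinh z.
Proof.
  intros hz.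
  assert (sinh 0 - 0 <= sinh z - z); [|rewrite sinh_0 in H; lra].
  assert (H := nonincr (fun z => sinh 0 - 0 - (sinh z - z)) (fun t => - (cosh t - 1)) 0 z hz).
  simpl in H. enough (sinh 0 - 0 - (sinh z - z) <= sinh 0 - 0 - (sinh 0 - 0)) by lra.
  apply H.
  - intros t _. unfold sinh, cosh. auto_derive; auto. lra.
  - intros t _. pose proof (cosh_ge1 t). lra.
Qed.

Lemma sinh_odd z : sinh (- z) = - sinh z.
Proof. unfold sinh. rewrite Ropp_involutive. lra. Qed.

Lemma z_sinh z : z^2 <= z * sinh z.
Proof.
  destruct (Rle_dec 0 z).
  - pose proof (sinh_ge z r). nra.
  - pose proof (sinh_ge (-z)). rewrite sinh_odd in H. nra.
Qed.

Lemma tanh_diff x y : tanh x - tanh y = sinh (x - y) / (cosh x * cosh y).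
Proof.
  pose proof (cosh_pos x). pose proof (cosh_pos y).
  unfold tanh. unfold sinh at 3. unfold Rminus at 3.
  assert (e1 : exp (x - y) = exp x * exp (- y)) by (rewrite <- exp_plus; f_equal; ring).
  assert (e2 : exp (- (x - y)) = exp (- x) * exp y) by (rewrite <- exp_plus; f_equal; ring).
  unfold tanh. unfold sinh. change (x + - y) with (x - y). rewrite e1, e2. unfold cosh in *. field. lra.
Qed.

Lemma tanh_strong x y : (x-y)^2 / (cosh x * cosh y) <= (x-y)*(tanh x - tanh y).
Proof.
  rewrite tanh_diff. pose proof (cosh_pos x). pose proof (cosh_pos y).
  pose proof (z_sinh (x-y)).
  unfold Rdiv. rewrite <- Rmult_assoc. apply Rmult_le_compat_r; [|lra].
  left. apply Rinv_0_lt_compat. nra.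
Qed.

Lemma tanh_mono x y : 0 <= (x-y)*(tanh x - tanh y).
Proof.
  eapply Rle_trans; [|apply tanh_strong]. pose proof (cosh_pos x). pose proof (cosh_pos y).
  apply Rdiv_le_0_compat; [apply pow2_ge_0|nra].
Qed.

Lemma tanh_lt x y : x < y -> tanh x < tanh y.
Proof.
  intros h. pose proof (tanh_strong y x). pose proof (cosh_pos x). pose proof (cosh_pos y).
  assert (0 < (y - x)^2 / (cosh y * cosh x)).
  { apply Rdiv_lt_0_compat; nra. }
  nra.
Qed.

Lemma tanh_0 : tanh 0 = 0.
Proof. unfold tanh. rewrite sinh_0. lra. Qed.

Lemma exp_le_exp' a b : a <= b -> exp a <= exp b.
Proof. intros h; destruct h. left; apply exp_increasing; auto. subst; lra. Qed.

Lemma cosh_le_exp x : cosh x <= exp (Rabs x).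
Proof.
  unfold cosh. unfold Rabs; destruct (Rcase_abs x).
  - assert (exp x <= exp (-x)) by (apply exp_le_exp'; lra). lra.
  - assert (exp (-x) <= exp x) by (apply exp_le_exp'; lra). lra.
Qed.

Lemma is_derive_lncosh x : is_derive (fun y => ln (cosh y)) x (tanh x).
Proof.
  unfold tanh, cosh, sinh. pose proof (exp_pos x); pose proof (exp_pos (-x)).
  auto_derive. lra. field. lra.
Qed.

Lemma lncosh_tangent x y : ln (cosh x) + tanh x * (y - x) <= ln (cosh y).
Proof.
  destruct (MVT_gen (fun y => ln (cosh y)) x y tanh) as [c [hc e]].
  - intros; apply is_derive_lncosh.
  - intros; eapply cont_of_derive; apply is_derive_lncosh.
  - simpl in e. 
    assert (0 <= (tanh c - tanh x) * (y - x)).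
    { destruct (Rle_dec x y).
      + rewrite Rmin_left in hc by lra. rewrite Rmax_right in hc by lra.
        destruct (Req_dec c x). subst; lra.
        pose proof (tanh_lt x c ltac:(lra)). nra.
      + rewrite Rmin_right in hc by lra. rewrite Rmax_left in hc by lra.
        destruct (Req_dec c x). subst; lra.
        pose proof (tanh_lt c x ltac:(lra)). nra. }
    nra.
Qed.

Lemma is_derive_eq (f : R -> R) x l l' : is_derive f x l -> l = l' -> is_derive f x l'.
Proof. intros; subst; auto. Qed.

Lemma deriv_sq (f : R -> R) x l c : is_derive f x l ->
  is_derive (fun t => (f t - c)^2) x (2*(f x - c)*l).
Proof.
  intros H.
  assert (H2 := is_derive_minus f (fun _ => c) x l 0 H (is_derive_const c x)).
  assert (H3 := is_derive_pow (fun t => minus (f t) c) 2 x _ H2).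
  simpl in H3. eapply is_derive_eq; [exact H3|].
  unfold minus, plus, opp, zero; simpl. ring.
Qed.

Lemma deriv_V (f g : R -> R) x l m c d : is_derive f x l -> is_derive g x m ->
  is_derive (fun t => (f t - c)^2 + (g t - d)^2) x (2*(f x - c)*l + 2*(g x - d)*m).
Proof.
  intros H1 H2.
  exact (is_derive_plus _ _ x _ _ (deriv_sq f x l c H1) (deriv_sq g x m d H2)).
Qed.

Lemma deriv_W (V : R -> R) x dv k : is_derive V x dv ->
  is_derive (fun t => V t * (1 + k*(t-1))) x (dv * (1 + k*(x-1)) + V x * k).
Proof.
  intros H.
  assert (Hl : is_derive (fun t => 1 + k*(t-1)) x k) by (auto_derive; auto; ring).
  assert (H3 := is_derive_mult V _ x _ _ H Hl).
  eapply is_derive_eq; [apply H3|].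
  - intros; unfold mult; simpl; ring.
  - unfold mult, plus; simpl; ring.
Qed.

Lemma H1p_eq L mp mm rp rm Sp Sm q1 q2 :
  H1p L mp mm rp rm Sp Sm 0 q1 q2 =
  / 2 * (- (Sp/rp*mp*lam rp mp) * tanh (lam rp mp * ((q2 - q1) / 2))
         - (Sm/rm*mm*lam rm mm) * tanh (lam rm mm * q1)).
Proof. unfold H1p. ring. Qed.

Lemma H2p_eq L mp mm rp rm Sp Sm q1 q2 :
  H2p L mp mm rp rm Sp Sm 0 q1 q2 =
  / 2 * ((Sp/rp*mp*lam rp mp) * tanh (lam rp mp * ((q2 - q1) / 2))
         + (Sm/rm*mm*lam rm mm) * tanh (lam rm mm * (L - q2))).
Proof. unfold H2p. ring. Qed.

Lemma key L mp mm rp rm Sp Sm z u1 u2 :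
  0 < rp -> 0 < mp -> Sp < 0 -> 0 < rm -> 0 < mm -> 0 < Sm ->
  (Sm/rm*mm*lam rm mm) * tanh (lam rm mm * z)
    + (Sp/rp*mp*lam rp mp) * tanh (lam rp mp * ((L - z - z)/2)) = 0 ->
  2*(u1 - z)*H1p L mp mm rp rm Sp Sm 0 u1 u2 + 2*(u2 - (L - z))*H2p L mp mm rp rm Sp Sm 0 u1 u2
  <= - (Sm/rm*mm) * ((lam rm mm * u1 - lam rm mm * z)*(tanh (lam rm mm * u1) - tanh (lam rm mm * z))
        + (lam rm mm * (L - u2) - lam rm mm * z)*(tanh (lam rm mm * (L - u2)) - tanh (lam rm mm * z))).
Proof.
  intros hrp hmp hSp hrm hmm hSm hg.
  rewrite H1p_eq, H2p_eq.
  set (lp := lam rp mp) in *. set (lm := lam rm mm) in *.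
  set (Up := lp * ((u2 - u1)/2)). set (Us := lp * ((L - z - z)/2)).
  set (T1 := tanh (lm * u1)). set (T2 := tanh (lm * (L - u2))). set (t1 := tanh (lm*z)).
  set (Tp := tanh Up). set (tp := tanh Us).
  assert (E : 2*(u1 - z)*(/2*(- (Sp/rp*mp*lp) * Tp - (Sm/rm*mm*lm) * T1))
            + 2*(u2 - (L - z))*(/2*((Sp/rp*mp*lp) * Tp + (Sm/rm*mm*lm) * T2))
          = 2*(Sp/rp*mp)*((Up - Us)*(Tp - tp))
            - (Sm/rm*mm) * ((lm * u1 - lm * z)*(T1 - t1) + (lm * (L - u2) - lm * z)*(T2 - t1))
            + ((u2 - (L - z)) - (u1 - z)) * ((Sm/rm*mm*lm) * t1 + (Sp/rp*mp*lp) * tp)).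
  { unfold Up, Us. field. lra. }
  assert (hg2 : Sm/rm*mm*lm*t1 + Sp/rp*mp*lp*tp = 0) by exact hg. rewrite E, hg2.
  assert (0 <= (Up - Us)*(Tp - tp)) by apply tanh_mono.
  assert (Sp/rp*mp < 0).
  { assert (Sp / rp < 0) by (unfold Rdiv; apply Rmult_neg_pos; [lra|apply Rinv_0_lt_compat; lra]). nra. }
  nra.
Qed.

Lemma strong_bound x y M : Rabs x <= M -> Rabs y <= M ->
  (x-y)^2 / (exp M * exp M) <= (x-y)*(tanh x - tanh y).
Proof.
  intros hx hy. eapply Rle_trans; [|apply tanh_strong].
  pose proof (cosh_pos x). pose proof (cosh_pos y).
  pose proof (cosh_le_exp x). pose proof (cosh_le_exp y).
  pose proof (exp_le_exp' _ _ hx). pose proof (exp_le_exp' _ _ hy).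
  unfold Rdiv. apply Rmult_le_compat_l; [apply pow2_ge_0|].
  apply Rinv_le_contravar; [nra|]. apply Rmult_le_compat; lra.
Qed.

Lemma lam_pos r m : 0 < r -> 0 < m -> 0 < lam r m.
Proof. intros. unfold lam. apply sqrt_lt_R0. apply Rdiv_lt_0_compat; auto. Qed.

Lemma abs_bound e r : 0 <= r -> e^2 <= r -> Rabs e <= r + 1.
Proof.
  intros h1 h2. unfold Rabs; destruct (Rcase_abs e); nra.
Qed.

Lemma cont_g A B lp lm L : continuity (fun x => B * tanh (lm * x) + A * tanh (lp * ((L - x - x)/2))).
Proof.
  intros x. apply continuity_pt_filterlim. apply (ex_derive_continuous (fun x => B * tanh (lm * x) + A * tanh (lp * ((L - x - x)/2)))).
  unfold tanh, sinh, cosh. auto_derive.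
  pose proof (exp_pos (lm*x)). pose proof (exp_pos (-(lm*x))).
  pose proof (exp_pos (lp * ((L - x - x) / 2))). pose proof (exp_pos (- (lp * ((L - x - x) / 2)))).
  replace (L + - x + - x) with (L - x - x) by ring. unfold Rdiv in *. repeat split; lra.
Qed.

Theorem proposition4p3 (L mp mm rp rm Sp Sm : R)
  (hL : 0 < L) (hmp : 0 < mp) (hmm : 0 < mm) (hrp : 0 < rp) (hrm : 0 < rm)
  (hSp : Sp < 0) (hSm : 0 < Sm) :
  exists q1s q2s : R,
    sym_stationary L mp mm rp rm Sp Sm 0 q1s q2s /\
    (forall a b, sym_stationary L mp mm rp rm Sp Sm 0 a b -> a = q1s /\ b = q2s) /\
    0 < q1s < L / 2 /\
    inT L q1s q2s /\
    (forall a b, inT L a b ->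
       Ep L mp mm rp rm Sp Sm 0 q1s q2s <= Ep L mp mm rp rm Sp Sm 0 a b) /\
    (forall q1 q2 : R -> R,
       is_solution L mp mm rp rm Sp Sm 0 q1 q2 ->
       inT L (q1 0) (q2 0) ->
       is_lim q1 p_infty q1s /\ is_lim q2 p_infty q2s).
Proof.
  pose proof (lam_pos rp mp hrp hmp) as hlp.
  pose proof (lam_pos rm mm hrm hmm) as hlm.
  set (lp := lam rp mp) in *. set (lm := lam rm mm) in *.
  assert (hc : 0 < Sm/rm*mm) by (apply Rmult_lt_0_compat; [apply Rdiv_lt_0_compat|]; lra).
  assert (hd : Sp/rp*mp < 0).
  { assert (Sp / rp < 0) by (unfold Rdiv; apply Rmult_neg_pos; [lra|apply Rinv_0_lt_compat; lra]). nra. }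
  set (c := Sm/rm*mm) in *. set (d := Sp/rp*mp) in *.
  assert (hB : 0 < c * lm) by nra. assert (hA : d * lp < 0) by nra.
  set (B := c * lm) in *. set (A := d * lp) in *.
  set (g := fun x => B * tanh (lm * x) + A * tanh (lp * ((L - x - x)/2))).
  assert (gmono : forall x y, x < y -> g x < g y).
  { intros x y hxy. unfold g.
    pose proof (tanh_lt (lm*x) (lm*y) ltac:(nra)).
    pose proof (tanh_lt (lp * ((L - y - y)/2)) (lp * ((L - x - x)/2)) ltac:(nra)).
    nra. }
  assert (g0 : g 0 < 0).
  { unfold g. rewrite Rmult_0_r, tanh_0.
    pose proof (tanh_lt 0 (lp * ((L - 0 - 0)/2)) ltac:(nra)). rewrite tanh_0 in H. nra. }
  assert (gL : 0 < g (L/2)).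
  { unfold g. replace (L - L/2 - L/2) with 0 by field. rewrite Rdiv_0_l, Rmult_0_r, tanh_0.
    pose proof (tanh_lt 0 (lm * (L/2)) ltac:(nra)). rewrite tanh_0 in H. nra. }
  destruct (IVT g 0 (L/2) (cont_g A B lp lm L) ltac:(lra) g0 gL) as [z [hz gz]].
  assert (hz0 : z <> 0) by (intro; subst; lra).
  assert (hzL : z <> L/2) by (intro; rewrite H in gz; lra).
  assert (gz' : B * tanh (lm * z) + A * tanh (lp * ((L - z - z)/2)) = 0) by exact gz.
  exists z, (L - z).
  split; [|split; [|split; [|split; [|split]]]].
  -
    unfold sym_stationary. rewrite H1p_eq, H2p_eq. fold lp lm c d A B.
    replace (L - (L - z)) with z by ring. replace (L - z - z) with (L - z - z) by ring.
    split; [|split]; [nra|nra|ring].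
  - intros a b [h1 [h2 h3]]. rewrite H1p_eq in h1. fold lp lm c d A B in h1.
    assert (b = L - a) by lra. subst b.
    replace (L - a - a) with (L - a - a) in h1 by ring.
    assert (ga : g a = 0) by (unfold g; lra).
    destruct (Rtotal_order a z) as [h|[h|h]].
    + pose proof (gmono a z h). lra.
    + subst; split; ring.
    + pose proof (gmono z a h). lra.
  - lra.
  - unfold inT; lra.
  - intros a b _. unfold Ep. fold lp lm c d.
    pose proof (lncosh_tangent (lm*z) (lm*a)) as T1.
    pose proof (lncosh_tangent (lm*(L-(L-z))) (lm*(L-b))) as T2.
    pose proof (lncosh_tangent (lp*((L-z-z)/2)) (lp*((b-a)/2))) as T3.
    replace (L - (L - z)) with z in * by ring.
    replace (L - z - z) with (L - z - z) in * by ring.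
    assert (P1 : 0 <= c/2 * (ln (cosh (lm*a)) - ln (cosh (lm*z)) - tanh (lm*z)*(lm*a - lm*z)))
      by (apply Rmult_le_pos; lra).
    assert (P2 : 0 <= c/2 * (ln (cosh (lm*(L-b))) - ln (cosh (lm*z)) - tanh (lm*z)*(lm*(L-b) - lm*z)))
      by (apply Rmult_le_pos; lra).
    assert (P3 : 0 <= -d * (ln (cosh (lp*((b-a)/2))) - ln (cosh (lp*((L-z-z)/2)))
                   - tanh (lp*((L-z-z)/2))*(lp*((b-a)/2) - lp*((L-z-z)/2))))
      by (apply Rmult_le_pos; lra).
    assert (Lin : c/2*tanh (lm*z)*(lm*a - lm*z) + c/2*tanh (lm*z)*(lm*(L-b) - lm*z)
                  + (-d)*tanh (lp*((L-z-z)/2))*(lp*((b-a)/2) - lp*((L-z-z)/2)) = 0).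
    { transitivity ((a-b+L-z-z)/2 * (B*tanh(lm*z) + A*tanh(lp*((L-z-z)/2)))).
      - unfold B, A. field.
      - rewrite gz'. ring. }
    lra.
  - intros q1 q2 [hsd _] _.
    set (V := fun t => (q1 t - z)^2 + (q2 t - (L - z))^2).
    set (dV := fun t => 2*(q1 t - z)*H1p L mp mm rp rm Sp Sm 0 (q1 t) (q2 t)
                      + 2*(q2 t - (L - z))*H2p L mp mm rp rm Sp Sm 0 (q1 t) (q2 t)).
    assert (hVd : forall t, 0 < t -> is_derive V t (dV t)).
    { intros t ht. destruct (hsd t ht) as [d1 d2]. exact (deriv_V q1 q2 t _ _ z (L - z) d1 d2). }
    assert (hkey : forall t, dV t <= - c * ((lm * q1 t - lm * z)*(tanh (lm * q1 t) - tanh (lm * z))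
        + (lm * (L - q2 t) - lm * z)*(tanh (lm * (L - q2 t)) - tanh (lm * z)))).
    { intros t. unfold dV. apply key; auto. }
    assert (hneg : forall t, dV t <= 0).
    { intros t. pose proof (hkey t).
      pose proof (tanh_mono (lm * q1 t) (lm * z)). pose proof (tanh_mono (lm * (L - q2 t)) (lm * z)).
      nra. }
    assert (hV0 : forall t, 0 <= V t).
    { intros t. unfold V. pose proof (pow2_ge_0 (q1 t - z)). pose proof (pow2_ge_0 (q2 t - (L - z))). lra. }
    assert (hVmon : forall t, 1 <= t -> V t <= V 1).
    { intros t ht. apply (nonincr V dV 1 t ht).
      - intros s hs. apply hVd. lra.
      - intros s _. apply hneg. }
    set (r := V 1 + 1).
    assert (hr : 0 <= V 1) by apply hV0.
    set (M := lm * (z + r)).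
    set (k0 := / (exp M * exp M)).
    assert (hk0 : 0 < k0) by (apply Rinv_0_lt_compat; pose proof (exp_pos M); nra).
    set (kap := c * lm * lm * k0).
    assert (hkap : 0 < kap) by (unfold kap; assert (0 < c*lm) by nra; apply Rmult_lt_0_compat; [nra|auto]).
    assert (hrate : forall t, 1 <= t -> dV t <= - kap * V t).
    { intros t ht.
      assert (e1 : Rabs (q1 t - z) <= r).
      { apply abs_bound; auto. pose proof (hVmon t ht). unfold V in *.
        pose proof (pow2_ge_0 (q2 t - (L - z))). lra. }
      assert (e2 : Rabs (q2 t - (L - z)) <= r).
      { apply abs_bound; auto. pose proof (hVmon t ht). unfold V in *.
        pose proof (pow2_ge_0 (q1 t - z)). lra. }
      assert (hMz : Rabs (lm * z) <= M).
      { rewrite Rabs_pos_eq by nra. unfold M, r. nra. }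
      assert (hM1 : Rabs (lm * q1 t) <= M).
      { rewrite Rabs_mult, (Rabs_pos_eq lm) by lra. unfold M.
        apply Rmult_le_compat_l; [lra|].
        pose proof (Rabs_triang (q1 t - z) z). replace (q1 t - z + z) with (q1 t) in H by ring.
        rewrite (Rabs_pos_eq z) in H by lra. lra. }
      assert (hM2 : Rabs (lm * (L - q2 t)) <= M).
      { rewrite Rabs_mult, (Rabs_pos_eq lm) by lra. unfold M.
        apply Rmult_le_compat_l; [lra|].
        pose proof (Rabs_triang (- (q2 t - (L - z))) z). replace (- (q2 t - (L - z)) + z) with (L - q2 t) in H by ring.
        rewrite Rabs_Ropp in H. rewrite (Rabs_pos_eq z) in H by lra. lra. }
      pose proof (strong_bound _ _ M hM1 hMz) as S1.
      pose proof (strong_bound _ _ M hM2 hMz) as S2.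
      fold k0 in S1, S2. unfold Rdiv in S1, S2. fold k0 in S1, S2.
      pose proof (hkey t) as K.
      assert (K2 : c * ((lm * q1 t - lm * z) ^ 2 * k0 + (lm * (L - q2 t) - lm * z) ^ 2 * k0)
         <= c * ((lm * q1 t - lm * z)*(tanh (lm * q1 t) - tanh (lm * z))
        + (lm * (L - q2 t) - lm * z)*(tanh (lm * (L - q2 t)) - tanh (lm * z)))).
      { apply Rmult_le_compat_l; lra. }
      assert (K3 : c * ((lm * q1 t - lm * z) ^ 2 * k0 + (lm * (L - q2 t) - lm * z) ^ 2 * k0) = kap * V t).
      { unfold kap, V. ring. }
      lra. }
    assert (hW : forall t, 1 <= t -> V t * (1 + kap*(t-1)) <= V 1).
    { intros t ht.
      assert (H := nonincr (fun t => V t * (1 + kap*(t-1))) (fun t => dV t * (1 + kap*(t-1)) + V t * kap) 1 t ht).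
      simpl in H. enough (V t * (1 + kap*(t-1)) <= V 1 * (1 + kap * (1 - 1))) by lra. apply H.
      - intros s hs. apply deriv_W. apply hVd. lra.
      - intros s hs. pose proof (hrate s (proj1 hs)).
        assert (0 < 1 + kap*(s-1)) by nra.
        assert (dV s * (1 + kap*(s-1)) <= - kap * V s * (1 + kap*(s-1))).
        { apply Rmult_le_compat_r; lra. }
        assert (0 <= kap * kap * V s * (s - 1)).
        { apply Rmult_le_pos; [|lra]. apply Rmult_le_pos; [nra|auto]. }
        nra. }
    assert (conv : forall e : R -> R, (forall t, e t ^ 2 <= V t) ->
               forall eps : posreal, exists T, forall t, T < t -> Rabs (e t) < eps).
    { intros e he eps. pose proof (cond_pos eps) as heps. destruct eps as [ep hep]. simpl in *. assert (hke : 0 < kap * (ep*ep)) by (apply Rmult_lt_0_compat; [auto|nra]).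
      exists (1 + V 1 / (kap * (ep*ep))). intros t ht.
      assert (hT : 0 <= V 1 / (kap * (ep*ep))).
      { apply Rdiv_le_0_compat; lra. }
      assert (hq : kap * (ep*ep) * (V 1 / (kap * (ep*ep))) = V 1) by (field; nra).
      assert (ht1 : 1 <= t) by lra.
      pose proof (hW t ht1). pose proof (he t).
      destruct (Rlt_dec (Rabs (e t)) ep) as [h|h]; auto.
      exfalso. assert (ep <= Rabs (e t)) by lra.
      assert (ep * ep <= e t ^ 2).
      { rewrite <- (pow2_abs (e t)). nra. }
      assert (kap * (ep*ep) * (V 1 / (kap * (ep*ep))) < kap * (ep*ep) * (t - 1)).
      { apply Rmult_lt_compat_l; [nra|lra]. }
      assert (ep*ep*(1 + kap*(t-1)) <= V t * (1 + kap*(t-1))).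
      { apply Rmult_le_compat_r; nra. }
      nra. }
    split; apply is_lim_spec; simpl; intros ep.
    + destruct (conv (fun t => q1 t - z)) with (eps := ep) as [T hT].
      { intros t. unfold V. pose proof (pow2_ge_0 (q2 t - (L - z))). lra. }
      exists T. intros t ht. apply hT; auto.
    + destruct (conv (fun t => q2 t - (L - z))) with (eps := ep) as [T hT].
      { intros t. unfold V. pose proof (pow2_ge_0 (q1 t - z)). lra. }
      exists T. intros t ht. apply hT; auto.
Qed.
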